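(* Let $\langle X,\leq\rangle$ be a countable dense linear order without endpoints, let $\Gamma$ be its automorphism group acting by application, and let $I$ be the ideal of subsets of $X$ that are well-ordered by $\leq$. Then $\Gamma\curvearrowright X, I$ is $\sigma$-complete.
   Context: For a group $\Gamma$ acting on $X$, an invariant ideal $I$ on $X$ and $a\subseteq X$, $\mathrm{pstab}(a)=\{\gamma\in\Gamma:\gamma\cdot x=x\ \forall x\in a\}$ and $\gamma\cdot b=\{\gamma\cdot x:x\in b\}$. The dynamical ideal is $\sigma$-complete if for every $a\in I$ and every sequence $\langle b_n:n\in\omega\rangle$ of sets in $I$ there are $\gamma_n\in\mathrm{pstab}(a)$ with $\bigcup_n\gamma_n\cdot b_n\in I$. *)

(* Defs.v *)
Set Implicit Arguments.

Section Defs.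
Variable X : Type.

Definition strict (le : X -> X -> Prop) (x y : X) : Prop := le x y /\ x <> y.

Definition linear_order (le : X -> X -> Prop) : Prop :=
  (forall x, le x x) /\
  (forall x y, le x y -> le y x -> x = y) /\
  (forall x y z, le x y -> le y z -> le x z) /\
  (forall x y, le x y \/ le y x).

Definition dense_no_endpoints (le : X -> X -> Prop) : Prop :=
  (forall x y, strict le x y -> exists z, strict le x z /\ strict le z y) /\
  (forall x, exists y, strict le y x) /\
  (forall x, exists y, strict le x y).

Definition countable_type : Prop := exists f : X -> nat, forall x y, f x = f y -> x = y.

Definition order_automorphism (le : X -> X -> Prop) (g : X -> X) : Prop :=
  (exists h : X -> X, (forall x, h (g x) = x) /\ (forall y, g (h y) = y)) /\
  (forall x y, le x y <-> le (g x) (g y)).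

Definition well_ordered_set (le : X -> X -> Prop) (a : X -> Prop) : Prop :=
  forall s : X -> Prop, (forall x, s x -> a x) -> (exists x, s x) ->
    exists m, s m /\ forall y, s y -> le m y.

Definition pstab (Gam : (X -> X) -> Prop) (a : X -> Prop) (g : X -> X) : Prop :=
  Gam g /\ forall x, a x -> g x = x.

Definition act_image (g : X -> X) (b : X -> Prop) : X -> Prop :=
  fun y => exists x, b x /\ y = g x.

Definition sigma_complete (Gam : (X -> X) -> Prop) (I : (X -> Prop) -> Prop) : Prop :=
  forall a : X -> Prop, I a ->
  forall b : nat -> X -> Prop, (forall n, I (b n)) ->
  exists gam : nat -> X -> X,
    (forall n, pstab Gam a (gam n)) /\
    I (fun y => exists n, act_image (gam n) (b n) y).

End Defs.

(* Main.v *)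
Require Import Defs.
From Stdlib Require Import List Classical ClassicalEpsilon FunctionalExtensionality PropExtensionality Lia Arith.
Import ListNotations.

Lemma choice_fun {A B : Type} (R : A -> B -> Prop) :
  (forall a, exists b, R a b) -> exists f : A -> B, forall a, R a (f a).
Proof.
  intro H. exists (fun a => proj1_sig (constructive_indefinite_description _ (H a))).
  intro a. exact (proj2_sig (constructive_indefinite_description _ (H a))).
Qed.

Section Main.
Variable X : Type.
Variable le : X -> X -> Prop.
Hypothesis Hlin : linear_order le.
Hypothesis Hden : dense_no_endpoints le.
Hypothesis Hcnt : countable_type X.

Notation lt := (strict le).

Lemma le_refl x : le x x. Proof. apply Hlin. Qed.
Lemma le_antisym x y : le x y -> le y x -> x = y. Proof. apply Hlin. Qed.
Lemma le_trans x y z : le x y -> le y z -> le x z. Proof. apply Hlin. Qed.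
Lemma le_total x y : le x y \/ le y x. Proof. apply Hlin. Qed.

Lemma lt_not_le x y : lt x y -> ~ le y x.
Proof. intros [H1 H2] H3. apply H2, le_antisym; auto. Qed.
Lemma not_le_lt x y : ~ le x y -> lt y x.
Proof.
  intro H. split. destruct (le_total x y); tauto.
  intro E; subst; apply H, le_refl.
Qed.
Lemma lt_le_trans x y z : lt x y -> le y z -> lt x z.
Proof.
  intros [H1 H2] H3. split. eapply le_trans; eauto.
  intro E; subst. apply H2, le_antisym; auto.
Qed.
Lemma le_lt_trans x y z : le x y -> lt y z -> lt x z.
Proof.
  intros H1 [H2 H3]. split. eapply le_trans; eauto.
  intro E; subst. apply H3, le_antisym; auto.
Qed.
Lemma lt_or x y : x <> y -> lt x y \/ lt y x.
Proof.
  intro H. destruct (le_total x y); [left|right]; split; auto.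
Qed.

Definition dno (D : X -> Prop) : Prop :=
  (forall x y, D x -> D y -> lt x y -> exists z, D z /\ lt x z /\ lt z y) /\
  (forall x, D x -> exists y, D y /\ lt y x) /\
  (forall x, D x -> exists y, D y /\ lt x y).

Definition iso (L : list (X * X)) : Prop :=
  forall pr pr', In pr L -> In pr' L ->
    (le (fst pr) (fst pr') <-> le (snd pr) (snd pr')).
Definition allD (D : X -> Prop) (L : list (X * X)) : Prop :=
  forall pr, In pr L -> D (fst pr) /\ D (snd pr).

Lemma list_ext (r : X -> X -> Prop) (rtot : forall x y, r x y \/ r y x)
  (rtr : forall x y z, r x y -> r y z -> r x z) (L : list (X * X)) (Q : X * X -> Prop) :
  (forall pr, In pr L -> ~ Q pr) \/
  exists m, In m L /\ Q m /\ forall pr, In pr L -> Q pr -> r (snd pr) (snd m).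
Proof.
  assert (rr : forall x, r x x) by (intro x; destruct (rtot x x); auto).
  induction L as [|a L IH].
  - left. intros pr [].
  - destruct (classic (Q a)) as [Qa|nQa].
    + right. destruct IH as [IH|[m [Hm [Qm Hmax]]]].
      * exists a. split; [left; auto|split; auto].
        intros pr [<-|Hp] Qp. apply rr.
        exfalso; eapply IH; eauto.
      * destruct (rtot (snd a) (snd m)) as [Ham|Hma].
        -- exists m. split; [right; auto|split; auto].
           intros pr [<-|Hp] Qp; auto.
        -- exists a. split; [left; auto|split; auto].
           intros pr [<-|Hp] Qp. apply rr.
           eapply rtr; eauto.
    + destruct IH as [IH|[m [Hm [Qm Hmax]]]].
      * left. intros pr [<-|Hp]; auto.
      * right. exists m. split; [right; auto|split; auto].
        intros pr [<-|Hp] Qp; [contradiction|auto].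
Qed.

Lemma iso_incl L L' : iso L -> (forall pr, In pr L' -> In pr L) -> iso L'.
Proof. intros H Hi pr pr' H1 H2. apply H; auto. Qed.

Lemma iso_cons L x y : iso L ->
  (forall pr, In pr L -> (le x (fst pr) <-> le y (snd pr)) /\ (le (fst pr) x <-> le (snd pr) y)) ->
  iso ((x, y) :: L).
Proof.
  intros H Hc pr pr' [<-|H1] [<-|H2]; simpl.
  - split; intros; apply le_refl.
  - apply Hc; auto.
  - apply Hc; auto.
  - apply H; auto.
Qed.

Lemma lt_pair a b c d : lt a b -> lt c d -> (le b a <-> le d c) /\ (le a b <-> le c d).
Proof.
  intros H1 H2. split; split; intro H.
  - exfalso; exact (lt_not_le _ _ H1 H).
  - exfalso; exact (lt_not_le _ _ H2 H).
  - apply H2.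
  - apply H1.
Qed.

Lemma forth D L x : dno D -> iso L -> allD D L -> D x ->
  exists y, D y /\ iso ((x, y) :: L).
Proof.
  intros [Hd [Hmin Hmax]] Hiso HD Dx.
  destruct (classic (exists y0, In (x, y0) L)) as [[y0 Hy0]|Hno].
  - exists y0. split. apply (HD _ Hy0).
    apply (iso_incl L); auto. intros pr [<-|H]; auto.
  - assert (Hgood : forall y, D y ->
      (forall pr, In pr L -> lt (fst pr) x -> lt (snd pr) y) ->
      (forall pr, In pr L -> lt x (fst pr) -> lt y (snd pr)) ->
      exists y, D y /\ iso ((x, y) :: L)).
    { intros y Dy H1 H2. exists y. split; auto. apply iso_cons; auto.
      intros pr Hpr. destruct (classic (fst pr = x)) as [E|NE].
      - exfalso. apply Hno. exists (snd pr). rewrite <- E. destruct pr; auto.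
      - destruct (lt_or _ _ NE) as [L1|L1].
        + apply lt_pair; auto.
        + destruct (lt_pair _ _ _ _ L1 (H2 pr Hpr L1)); split; auto. }
    destruct (list_ext le le_total le_trans L (fun pr => lt (fst pr) x))
      as [E1|[m1 [Hm1 [Q1 M1]]]];
    destruct (list_ext (fun a b => le b a) (fun a b => le_total b a)
      (fun a b c h1 h2 => le_trans _ _ _ h2 h1) L (fun pr => lt x (fst pr)))
      as [E2|[m2 [Hm2 [Q2 M2]]]].
    + apply (Hgood x Dx); intros pr Hpr Q; exfalso.
      * exact (E1 pr Hpr Q).
      * exact (E2 pr Hpr Q).
    + destruct (Hmin (snd m2) (proj2 (HD _ Hm2))) as [y [Dy Hy]].
      apply (Hgood y Dy).
      * intros pr Hpr Q; exfalso; eapply E1; eauto.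
      * intros pr Hpr Q. eapply lt_le_trans; eauto.
    + destruct (Hmax (snd m1) (proj2 (HD _ Hm1))) as [y [Dy Hy]].
      apply (Hgood y Dy).
      * intros pr Hpr Q. eapply le_lt_trans; eauto.
      * intros pr Hpr Q; exfalso; eapply E2; eauto.
    + assert (L12 : lt (snd m1) (snd m2)).
      { assert (Lf : lt (fst m1) (fst m2)) by (eapply lt_le_trans; eauto; apply Q2).
        split. apply (Hiso m1 m2 Hm1 Hm2), Lf.
        intro E. apply (lt_not_le _ _ Lf). apply (Hiso m2 m1 Hm2 Hm1). rewrite E; apply le_refl. }
      destruct (Hd _ _ (proj2 (HD _ Hm1)) (proj2 (HD _ Hm2)) L12) as [y [Dy [Hy1 Hy2]]].
      apply (Hgood y Dy).
      * intros pr Hpr Q. eapply le_lt_trans; eauto.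
      * intros pr Hpr Q. eapply lt_le_trans; eauto.
Qed.

Definition swapL (L : list (X * X)) := map (fun pr => (snd pr, fst pr)) L.

Lemma iso_swap L : iso L -> iso (swapL L).
Proof.
  intros H pr pr' H1 H2. unfold swapL in *.
  apply in_map_iff in H1 as [p1 [<- H1]]. apply in_map_iff in H2 as [p2 [<- H2]].
  simpl. symmetry. apply H; auto.
Qed.
Lemma allD_swap D L : allD D L -> allD D (swapL L).
Proof.
  intros H pr H1. unfold swapL in *.
  apply in_map_iff in H1 as [p1 [<- H1]]. simpl. destruct (H _ H1); auto.
Qed.
Lemma iso_unswap L : iso (swapL L) -> iso L.
Proof.
  intros H pr pr' H1 H2. symmetry.
  apply (H (snd pr, fst pr) (snd pr', fst pr')); unfold swapL;
  apply in_map_iff; eauto.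
Qed.

Lemma back D L y : dno D -> iso L -> allD D L -> D y ->
  exists x, D x /\ iso ((x, y) :: L).
Proof.
  intros Hd Hi HD Dy.
  destruct (forth D (swapL L) y Hd (iso_swap _ Hi) (allD_swap _ _ HD) Dy) as [x [Dx Hx]].
  exists x. split; auto. apply iso_unswap. exact Hx.
Qed.

Definition autD (D : X -> Prop) (f : X -> X) : Prop :=
  (forall x, D x -> D (f x)) /\
  (forall x y, D x -> D y -> (le x y <-> le (f x) (f y))) /\
  (forall y, D y -> exists x, D x /\ f x = y).

Lemma homog D p q : dno D -> D p -> D q ->
  exists g, autD D g /\ g p = q.
Proof.
  intros Hd Dp Dq. destruct Hcnt as [code Hcode].
  destruct (choice_fun (fun (Lx : list (X * X) * X) y =>
     iso (fst Lx) -> allD D (fst Lx) -> D (snd Lx) -> D y /\ iso ((snd Lx, y) :: fst Lx)))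
    as [fext Hfext].
  { intros [L x]; simpl. destruct (classic (iso L /\ allD D L /\ D x)) as [[H1 [H2 H3]]|Hn].
    - destruct (forth D L x Hd H1 H2 H3) as [y Hy]. exists y; auto.
    - exists x. intros; exfalso; auto. }
  destruct (choice_fun (fun (Ly : list (X * X) * X) x =>
     iso (fst Ly) -> allD D (fst Ly) -> D (snd Ly) -> D x /\ iso ((x, snd Ly) :: fst Ly)))
    as [bext Hbext].
  { intros [L y]; simpl. destruct (classic (iso L /\ allD D L /\ D y)) as [[H1 [H2 H3]]|Hn].
    - destruct (back D L y Hd H1 H2 H3) as [x Hx]. exists x; auto.
    - exists y. intros; exfalso; auto. }
  destruct (choice_fun (fun (k : nat) (o : option X) =>
     match o with Some x => D x /\ code x = k | None => forall x, D x -> code x <> k end))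
    as [dec Hdec].
  { intro k. destruct (classic (exists x, D x /\ code x = k)) as [[x Hx]|Hn].
    - exists (Some x); auto.
    - exists None. intros x Dx E. apply Hn; eauto. }
  pose (stepF := fun L o => match o with Some x => (x, fext (L, x)) :: L | None => L end).
  pose (stepB := fun L o => match o with Some y => (bext (L, y), y) :: L | None => L end).
  pose (sq := fix s (n : nat) : list (X * X) :=
     match n with 0 => [(p, q)] | S n => stepB (stepF (s n) (dec n)) (dec n) end).
  assert (Hinv : forall n, iso (sq n) /\ allD D (sq n)).
  { induction n as [|n [IH1 IH2]]; simpl.
    - split. apply iso_cons. intros pr [] pr' []. intros pr [].
      intros pr [<-|[]]; simpl; auto.
    - assert (HF : iso (stepF (sq n) (dec n)) /\ allD D (stepF (sq n) (dec n))).
      { unfold stepF. specialize (Hdec n). destruct (dec n) as [x|]; auto.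
        destruct (Hfext (sq n, x) IH1 IH2 (proj1 Hdec)) as [Dy Hy]. simpl in *.
        split; auto. intros pr [<-|H]; simpl; auto. split; auto. tauto. }
      destruct HF as [HF1 HF2]. unfold stepB. specialize (Hdec n).
      destruct (dec n) as [y|]; auto.
      destruct (Hbext (stepF (sq n) (Some y), y) HF1 HF2 (proj1 Hdec)) as [Dx Hx]. simpl in *.
      split; auto. intros pr [<-|H]; simpl; [split; tauto | auto]. }
  assert (Hstep : forall n pr, In pr (sq n) -> In pr (sq (S n))).
  { intros n pr H. simpl. unfold stepB, stepF.
    destruct (dec n); simpl; auto. }
  assert (Hmono : forall n m pr, n <= m -> In pr (sq n) -> In pr (sq m)).
  { intros n m pr Hnm. induction Hnm; auto. }
  pose (G := fun x y => exists n, In (x, y) (sq n)).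
  assert (Hcom : forall x y x' y', G x y -> G x' y' -> le x x' <-> le y y').
  { intros x y x' y' [n1 H1] [n2 H2].
    apply (proj1 (Hinv (max n1 n2)) (x, y) (x', y')).
    - apply (Hmono n1); [lia|exact H1].
    - apply (Hmono n2); [lia|exact H2]. }
  assert (Hfun : forall x y y', G x y -> G x y' -> y = y').
  { intros x y y' H1 H2. apply le_antisym; apply (Hcom x _ x); auto; apply le_refl. }
  assert (HGD : forall x y, G x y -> D x /\ D y).
  { intros x y [n H]. apply (proj2 (Hinv n) _ H). }
  assert (Htot : forall x, D x -> exists y, G x y).
  { intros x Dx. specialize (Hdec (code x)). destruct (dec (code x)) as [x'|] eqn:Ed.
    - destruct Hdec as [_ Hc]. apply Hcode in Hc. subst x'.
      exists (fext (sq (code x), x)). exists (S (code x)). simpl. rewrite Ed.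
      unfold stepB, stepF. simpl. auto.
    - exfalso; eapply Hdec; eauto. }
  assert (Hsur : forall y, D y -> exists x, G x y).
  { intros y Dy. specialize (Hdec (code y)). destruct (dec (code y)) as [y'|] eqn:Ed.
    - destruct Hdec as [_ Hc]. apply Hcode in Hc. subst y'.
      eexists. exists (S (code y)). simpl. rewrite Ed.
      unfold stepB, stepF. simpl. left; reflexivity.
    - exfalso; eapply Hdec; eauto. }
  destruct (choice_fun (fun x y => (exists y, G x y) -> G x y)) as [g Hg].
  { intro x. destruct (classic (exists y, G x y)) as [[y Hy]|Hn].
    - exists y; auto.
    - exists x; intro; contradiction. }
  assert (HgG : forall x, D x -> G x (g x)) by (intros; apply Hg, Htot; auto).
  exists g. split; [split; [|split]|].
  - intros x Dx. apply (HGD _ _ (HgG x Dx)).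
  - intros x y Dx Dy. apply Hcom; auto.
  - intros y Dy. destruct (Hsur y Dy) as [x Hx]. exists x.
    destruct (HGD _ _ Hx) as [Dx _]. split; auto. eapply Hfun; eauto.
  - apply (Hfun p). apply HgG; auto. exists 0. simpl; auto.
Qed.

Notation wo := (well_ordered_set le).

Lemma wo_sub A B : wo A -> (forall x, B x -> A x) -> wo B.
Proof. intros H Hs s Hsb Hne. apply H; auto. Qed.

Lemma wo_union A B : wo A -> wo B -> wo (fun x => A x \/ B x).
Proof.
  intros HA HB s Hs Hne.
  destruct (classic (exists x, s x /\ A x)) as [HnA|HnA];
  destruct (classic (exists x, s x /\ B x)) as [HnB|HnB].
  - destruct (HA (fun x => s x /\ A x) (fun x h => proj2 h) HnA) as [ma [[sa Aa] Ma]].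
    destruct (HB (fun x => s x /\ B x) (fun x h => proj2 h) HnB) as [mb [[sb Bb] Mb]].
    destruct (le_total ma mb) as [Hab|Hab].
    + exists ma. split; auto. intros y sy. destruct (Hs y sy).
      * apply Ma; auto.
      * apply (le_trans _ mb _ Hab). apply Mb; auto.
    + exists mb. split; auto. intros y sy. destruct (Hs y sy).
      * apply (le_trans _ ma _ Hab). apply Ma; auto.
      * apply Mb; auto.
  - destruct (HA (fun x => s x /\ A x) (fun x h => proj2 h) HnA) as [ma [[sa Aa] Ma]].
    exists ma. split; auto. intros y sy. destruct (Hs y sy).
    + apply Ma; auto.
    + exfalso; apply HnB; eauto.
  - destruct (HB (fun x => s x /\ B x) (fun x h => proj2 h) HnB) as [mb [[sb Bb] Mb]].
    exists mb. split; auto. intros y sy. destruct (Hs y sy).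
    + exfalso; apply HnA; eauto.
    + apply Mb; auto.
  - destruct Hne as [x sx]. exfalso. destruct (Hs x sx); [apply HnA|apply HnB]; eauto.
Qed.

Lemma wo_subsingleton A : (forall x y, A x -> A y -> x = y) -> wo A.
Proof.
  intros H s Hs [x sx]. exists x. split; auto. intros y sy.
  rewrite (H x y (Hs x sx) (Hs y sy)). apply le_refl.
Qed.

Lemma wo_image D b f : wo b -> autD D f -> wo (fun y => exists x, b x /\ D x /\ y = f x).
Proof.
  intros Hb [Hf1 [Hf2 Hf3]] s Hs [y0 sy0].
  destruct (Hs y0 sy0) as [x0 [bx0 [Dx0 E0]]].
  destruct (Hb (fun x => b x /\ D x /\ s (f x)) (fun x h => proj1 h)) as [m [[bm [Dm sm]] Mm]].
  { exists x0. subst; auto. }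
  exists (f m). split; auto. intros y sy.
  destruct (Hs y sy) as [x [bx [Dx E]]]. subst y.
  apply (proj1 (Hf2 m x Dm Dx)). apply Mm; auto.
Qed.

Lemma cofinal D : dno D -> (exists x, D x) ->
  exists c : nat -> X, (forall k, D (c k)) /\ (forall i j, i <= j -> le (c i) (c j)) /\
    (forall x, D x -> exists k, lt x (c k)).
Proof.
  intros [Hd [Hmin Hmax]] [d0 Dd0]. destruct Hcnt as [code Hcode].
  destruct (choice_fun (fun (ck : X * nat) y =>
     D (fst ck) -> D y /\ lt (fst ck) y /\ forall x, D x -> code x = snd ck -> lt x y))
    as [nxt Hnxt].
  { intros [c k]; simpl. destruct (classic (D c)) as [Dc|nDc].
    - destruct (classic (exists x, D x /\ code x = k)) as [[x [Dx Ex]]|Hn].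
      + destruct (le_total c x) as [Hcx|Hxc].
        * destruct (Hmax x Dx) as [y [Dy Hy]]. exists y. intros _. split; auto. split.
          eapply le_lt_trans; eauto. intros x' Dx' E'. rewrite <- Ex in E'.
          apply Hcode in E'. subst; auto.
        * destruct (Hmax c Dc) as [y [Dy Hy]]. exists y. intros _. split; auto. split; auto.
          intros x' Dx' E'. rewrite <- Ex in E'. apply Hcode in E'. subst.
          eapply le_lt_trans; eauto.
      + destruct (Hmax c Dc) as [y [Dy Hy]]. exists y. intros _. split; auto. split; auto.
        intros x' Dx' E'. exfalso; apply Hn; eauto.
    - exists c. intro; contradiction. }
  pose (c := fix c (k : nat) : X := match k with 0 => d0 | S k => nxt (c k, k) end).
  assert (Hc : forall k, D (c k)).
  { induction k; simpl; auto. apply (Hnxt (c k, k)); auto. }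
  exists c. split; auto. split.
  - intros i j Hij. induction Hij. apply le_refl.
    apply (le_trans _ (c m) _ IHHij). simpl. apply (proj1 (proj2 (Hnxt (c m, m) (Hc m)))).
  - intros x Dx. exists (S (code x)). simpl. apply (proj2 (proj2 (Hnxt (c (code x), code x) (Hc _)))); auto.
Qed.

Lemma core D : dno D -> (exists x, D x) -> forall b : nat -> X -> Prop, (forall n, wo (b n)) ->
  exists F : nat -> X -> X, (forall n, autD D (F n)) /\
    wo (fun y => exists n x, b n x /\ D x /\ y = F n x).
Proof.
  intros Hd Hne b Hb.
  destruct (cofinal D Hd Hne) as [c [Dc [Mc Cc]]].
  destruct (choice_fun (fun n f => autD D f /\ forall x, b n x -> D x -> le (c n) (f x)))
    as [F HF].
  { intro n. destruct (classic (exists x, b n x /\ D x)) as [Hx|Hn].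
    - destruct (Hb n (fun x => b n x /\ D x) (fun x h => proj1 h) Hx) as [m [[bm Dm] Mm]].
      destruct (homog D m (c n) Hd Dm (Dc n)) as [g [Hg Egm]].
      exists g. split; auto. intros x bx Dx. rewrite <- Egm. apply (proj1 (proj1 (proj2 Hg) m x Dm Dx)). apply Mm; auto.
    - exists (fun x => x). split.
      + split; [|split]; auto. intros; split; auto. intros y Dy; exists y; auto.
      + intros x bx Dx. exfalso; eauto. }
  exists F. split. intro n; apply HF.
  assert (Hfin : forall N, wo (fun y => exists n x, n < N /\ b n x /\ D x /\ y = F n x)).
  { induction N.
    - apply wo_subsingleton. intros x y [n [_ [Hn _]]]. lia.
    - apply (wo_sub _ _ (wo_union _ _ IHN (wo_image D (b N) (F N) (Hb N) (proj1 (HF N))))).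
      intros y [n [x [Hn [bx [Dx E]]]]].
      destruct (Nat.eq_dec n N) as [->|Hne'].
      + right. eauto.
      + left. exists n, x. repeat split; auto. lia. }
  intros s Hs [s0 Hs0].
  destruct (Hs s0 Hs0) as [n0 [x0 [bx0 [Dx0 E0]]]].
  assert (Ds0 : D s0) by (subst; apply (proj1 (HF n0)); auto).
  destruct (Cc s0 Ds0) as [N HN].
  destruct (Hfin N (fun y => s y /\ le y s0)) as [m [[sm ms0] Mm]].
  { intros y [sy ys0]. destruct (Hs y sy) as [n [x [bx [Dx E]]]].
    exists n, x. repeat split; auto.
    destruct (le_lt_dec N n) as [HnN|HnN]; auto. exfalso.
    apply (lt_not_le _ _ HN). eapply le_trans. apply (Mc N n HnN).
    eapply le_trans; [|exact ys0]. rewrite E. apply (proj2 (HF n)); auto. }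
  { exists s0. split; auto. apply le_refl. }
  exists m. split; auto. intros y sy. destruct (le_total y s0).
  - apply Mm; auto.
  - eapply le_trans; eauto.
Qed.

Section Reg.
Variable a : X -> Prop.
Hypothesis Ha : wo a.

Definition same x y := forall z, a z -> (le x z <-> le y z).
Definition inner x := ~ a x /\ exists u, lt u x /\ same u x.
Definition cls x := fun y => inner y /\ same x y.

Lemma same_refl x : same x x. Proof. intros z _; tauto. Qed.
Lemma same_sym x y : same x y -> same y x.
Proof. intros H z Hz; symmetry; apply H; auto. Qed.
Lemma same_trans x y w : same x y -> same y w -> same x w.
Proof. intros H1 H2 z Hz; rewrite (H1 z Hz); apply H2; auto. Qed.

Lemma same_conv x w y : le x w -> le w y -> same x y -> same x w.
Proof.
  intros H1 H2 H z Hz. split; intro H3.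
  - apply (le_trans _ y); auto. apply H; auto.
  - eapply le_trans; eauto.
Qed.

Lemma same_nota w y : same w y -> lt w y -> ~ a w.
Proof.
  intros H Hl Aw. apply (lt_not_le _ _ Hl). apply (H w Aw), le_refl.
Qed.

Lemma same_up x : ~ a x -> exists v, lt x v /\ same v x /\ ~ a v.
Proof.
  intro nAx. destruct Hden as [Hd [_ Hmax]].
  destruct (classic (exists z, a z /\ le x z)) as [Hz|Hz].
  - destruct (Ha (fun z => a z /\ le x z) (fun z h => proj1 h) Hz) as [m [[Am xm] Mm]].
    assert (Lxm : lt x m) by (split; auto; intro E; subst; auto).
    destruct (Hd _ _ Lxm) as [v [H1 H2]]. exists v. split; auto. split.
    + intros z Az. split; intro H.
      * apply (le_trans _ v); auto. apply H1.
      * apply (le_trans _ m). apply H2. apply Mm; auto.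
    + intro Av. apply (lt_not_le _ _ H2). apply Mm. split; auto. apply H1.
  - destruct (Hmax x) as [v Hv]. exists v. split; auto. split.
    + intros z Az. split; intro H.
      * exfalso; apply Hz; exists z; split; auto. apply (le_trans _ v); auto. apply Hv.
      * exfalso; apply Hz; eauto.
    + intro Av. apply Hz. exists v. split; auto. apply Hv.
Qed.

Lemma cross1 x x' y : same x x' -> ~ same x y -> (le x y <-> le x' y).
Proof.
  intros Hs Hn. split; intro H.
  - destruct (classic (le x' y)) as [|H']; auto. exfalso. apply not_le_lt in H'.
    apply Hn. apply (same_conv x y x'); auto. apply H'.
  - destruct (classic (le x y)) as [|H']; auto. exfalso. apply not_le_lt in H'.
    apply Hn. apply (same_trans _ x'); auto.
    apply (same_conv x' y x); auto. apply H'. apply same_sym; auto.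
Qed.

Lemma cross2 x y y' : same y y' -> ~ same x y -> (le x y <-> le x y').
Proof.
  intros Hs Hn. split; intro H.
  - destruct (classic (le x y')) as [|H']; auto. exfalso. apply not_le_lt in H'.
    apply Hn. apply (same_trans _ y').
    + apply same_sym. apply (same_conv y' x y); auto. apply H'. apply same_sym; auto.
    + apply same_sym; auto.
  - destruct (classic (le x y)) as [|H']; auto. exfalso. apply not_le_lt in H'.
    apply Hn. apply same_sym. apply (same_conv y x y'); auto. apply H'.
Qed.

Lemma cls_dno x : inner x -> dno (cls x).
Proof.
  intros Ix. destruct Hden as [Hd _].
  split; [|split].
  - intros y1 y2 [I1 S1] [I2 S2] L12. destruct (Hd _ _ L12) as [w [H1 H2]].
    assert (S12 : same y1 y2) by (apply (same_trans _ x); auto; apply same_sym; auto).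
    assert (S1w : same y1 w) by (apply (same_conv y1 w y2); auto; [apply H1|apply H2]).
    exists w. split; auto. split.
    + split.
      * apply (same_nota w y2); auto. apply (same_trans _ y1); auto. apply same_sym; auto.
      * exists y1; auto.
    + apply (same_trans _ y1); auto.
  - intros y [[nAy [u [Hu Su]]] Sy]. destruct (Hd _ _ Hu) as [w [H1 H2]].
    assert (Suw : same u w) by (apply (same_conv u w y); auto; [apply H1|apply H2]).
    assert (Swy : same w y) by (apply (same_trans _ u); auto; apply same_sym; auto).
    exists w. split; auto. split.
    + split. apply (same_nota w y); auto. exists u; auto.
    + apply (same_trans _ y); auto. apply same_sym; auto.
  - intros y [[nAy Hu] Sy]. destruct (same_up y nAy) as [v [H1 [H2 H3]]].
    exists v. split; auto. split.
    + split; auto. exists y. split; auto. apply same_sym; auto.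
    + apply (same_trans _ y); auto. apply same_sym; auto.
Qed.

Lemma cls_eq x y : same x y -> cls x = cls y.
Proof.
  intro H. apply functional_extensionality. intro z. apply propositional_extensionality.
  unfold cls. split; intros [I S]; split; auto.
  - apply (same_trans _ x); auto. apply same_sym; auto.
  - apply (same_trans _ y); auto.
Qed.

Lemma inner_edge w y : inner w -> same w y -> ~ inner y -> (le w y <-> a y).
Proof.
  intros Iw Swy nIy. split; intro H.
  - apply NNPP. intro nAy. apply nIy. split; auto. exists w. split; auto.
    split; auto. intro E; subst; auto.
  - apply (Swy y H), le_refl.
Qed.

Lemma inner_edge2 w x : inner w -> same w x -> ~ inner x -> (le x w <-> ~ a x).
Proof.
  intros Iw Swx nIx. split; intro H.
  - intro Ax. assert (le w x) by (apply (Swx x Ax), le_refl).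
    assert (w = x) by (apply le_antisym; auto). subst; auto.
  - destruct (le_total x w) as [|H']; auto. exfalso. apply nIx. split; auto.
    exists w. split; auto. split; auto. intro E; subst; auto.
Qed.

End Reg.

Lemma autom_of g : (forall x y, le x y <-> le (g x) (g y)) -> (forall y, exists x, g x = y) ->
  order_automorphism le g.
Proof.
  intros Hiff Hsur. split; auto.
  destruct (choice_fun (fun y x => g x = y) Hsur) as [h Hh].
  exists h. split; auto. intro x. apply le_antisym; apply Hiff; rewrite Hh; apply le_refl.
Qed.

Lemma main_sec : sigma_complete (order_automorphism le) wo.
Proof.
  intros a Ha b Hb.
  destruct (choice_fun (fun (D : X -> Prop) (F : nat -> X -> X) =>
     (dno D /\ exists x, D x) -> (forall n, autD D (F n)) /\
        wo (fun y => exists n x, b n x /\ D x /\ y = F n x))) as [FF HFF].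
  { intro D. destruct (classic (dno D /\ exists x, D x)) as [[H1 H2]|Hn].
    - destruct (core D H1 H2 b Hb) as [F HF]. exists F; auto.
    - exists (fun _ x => x). intro; contradiction. }
  pose (gam := fun n x => if excluded_middle_informative (inner a x) then FF (cls a x) n x else x).
  assert (HFFi : forall x, inner a x -> (forall n, autD (cls a x) (FF (cls a x) n)) /\
        wo (fun y => exists n x0, b n x0 /\ cls a x x0 /\ y = FF (cls a x) n x0)).
  { intros x Ix. apply HFF. split. apply cls_dno; auto. exists x. split; auto. apply same_refl. }
  assert (Hg_in : forall n x, inner a x -> gam n x = FF (cls a x) n x).
  { intros n x Ix. unfold gam. destruct (excluded_middle_informative (inner a x)); tauto. }
  assert (Hg_out : forall n x, ~ inner a x -> gam n x = x).
  { intros n x Ix. unfold gam. destruct (excluded_middle_informative (inner a x)); tauto. }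
  assert (Hg_cls : forall n x, inner a x -> cls a x (gam n x)).
  { intros n x Ix. rewrite Hg_in; auto. apply (proj1 (HFFi x Ix) n). split; auto. apply same_refl. }
  assert (Hg_same : forall n x, same a x (gam n x)).
  { intros n x. destruct (classic (inner a x)) as [Ix|nIx].
    - apply (Hg_cls n x Ix).
    - rewrite Hg_out; auto. apply same_refl. }
  exists gam. split.
  - intro n. split.
    + apply autom_of.
      * intros x y. destruct (classic (same a x y)) as [Sxy|nS].
        -- destruct (classic (inner a x)) as [Ix|nIx]; destruct (classic (inner a y)) as [Iy|nIy].
           ++ rewrite (Hg_in n x Ix), (Hg_in n y Iy). rewrite <- (cls_eq a x y Sxy).
              apply (proj1 (proj2 (proj1 (HFFi x Ix) n))).
              ** split; auto. apply same_refl.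
              ** split; auto.
           ++ rewrite (Hg_out n y nIy). rewrite (inner_edge a x y Ix Sxy nIy). symmetry.
              apply inner_edge; auto. apply (Hg_cls n x Ix).
              apply (same_trans a _ x); auto. apply same_sym; auto.
           ++ rewrite (Hg_out n x nIx). rewrite (inner_edge2 a y x Iy (same_sym a _ _ Sxy) nIx).
              symmetry. apply inner_edge2; auto. apply (Hg_cls n y Iy).
              apply (same_trans a _ y); auto. apply same_sym; auto. apply same_sym; auto.
           ++ rewrite (Hg_out n x nIx), (Hg_out n y nIy). tauto.
        -- rewrite (cross1 a x (gam n x) y (Hg_same n x) nS). apply (cross2 a (gam n x) y (gam n y) (Hg_same n y)).
           intro S. apply nS. apply (same_trans a _ (gam n x)); auto.
      * intro y. destruct (classic (inner a y)) as [Iy|nIy].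
        -- destruct (proj2 (proj2 (proj1 (HFFi y Iy) n)) y (conj Iy (same_refl a y)))
             as [x [[Ix Syx] Ex]].
           exists x. rewrite (Hg_in n x Ix). rewrite (cls_eq a x y (same_sym a _ _ Syx)). auto.
        -- exists y. apply Hg_out; auto.
    + intros x Ax. apply Hg_out. intros [nA _]; auto.
  - set (U := fun y => exists n, act_image (gam n) (b n) y).
    assert (HT : forall r, wo (fun y => U y /\ same a r y)).
    { intro r.
      apply (wo_sub (fun y => (a y /\ same a r y) \/ ((~ a y /\ ~ inner a y /\ same a r y) \/
                               (inner a y /\ same a r y /\ U y)))).
      - apply wo_union; [|apply wo_union].
        + apply wo_subsingleton. intros y1 y2 [A1 S1] [A2 S2].
          assert (S12 : same a y1 y2) by (apply (same_trans a _ r); auto; apply same_sym; auto).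
          apply le_antisym.
          * apply (S12 y2 A2), le_refl.
          * apply (same_sym a _ _ S12 y1 A1), le_refl.
        + apply wo_subsingleton. intros y1 y2 [nA1 [nI1 S1]] [nA2 [nI2 S2]].
          assert (S12 : same a y1 y2) by (apply (same_trans a _ r); auto; apply same_sym; auto).
          apply NNPP. intro NE. destruct (lt_or _ _ NE) as [L|L].
          * apply nI2. split; auto. exists y1; auto.
          * apply nI1. split; auto. exists y2. split; auto. apply same_sym; auto.
        + destruct (classic (exists y0, inner a y0 /\ same a r y0 /\ U y0)) as [[y0 [I0 [S0 _]]]|Hn].
          * apply (wo_sub _ _ (proj2 (HFFi y0 I0))).
            intros y [Iy [Sy [n [x [bx Ex]]]]].
            assert (Ix : inner a x).
            { apply NNPP. intro nIx. rewrite (Hg_out n x nIx) in Ex. subst; auto. }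
            assert (Sy0x : same a y0 x).
            { apply (same_trans a _ y).
              - apply (same_trans a _ r); auto. apply same_sym; auto.
              - rewrite Ex. apply same_sym, Hg_same. }
            exists n, x. split; auto. split. split; auto.
            rewrite Ex, (Hg_in n x Ix), (cls_eq a x y0); auto. apply same_sym; auto.
          * apply wo_subsingleton. intros y1 y2 H1. exfalso; eauto.
      - intros y [Uy Sy]. destruct (classic (a y)) as [Ay|nAy]; [left; auto|right].
        destruct (classic (inner a y)); [right|left]; auto. }
    intros s Hs [s0 Hs0].
    destruct (classic (exists z, a z /\ exists t, s t /\ le t z)) as [Hz|Hz].
    + destruct (Ha _ (fun z h => proj1 h) Hz) as [m [[Am [t0 [st0 ltm0]]] Mm]].
      destruct (HT m (fun t => s t /\ le t m)) as [mm [[smm lmm] Mmm]].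
      * intros t [st ltm]. split. apply Hs; auto.
        intros z Az. split; intro H.
        -- eapply le_trans; eauto.
        -- apply Mm. split; auto. exists t; auto.
      * exists t0; auto.
      * exists mm. split; auto. intros y sy. destruct (le_total y m) as [H|H].
        -- apply Mmm; auto.
        -- eapply le_trans; eauto.
    + destruct (HT s0 s) as [mm Hmm].
      * intros t st. split. apply Hs; auto.
        intros z Az. split; intro H; exfalso; apply Hz; eauto.
      * exists s0; auto.
      * exists mm; auto.
Qed.

End Main.

Theorem mainTheorem12 (X : Type) (le : X -> X -> Prop) :
  linear_order le -> dense_no_endpoints le -> countable_type X ->
  sigma_complete (order_automorphism le) (well_ordered_set le).
Proof.
  intros H1 H2 H3. apply main_sec; auto.
Qed.
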